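(* Consider the model described in the context and suppose the Lipschitz assumption holds. Let $Q$ map each point $z\in\mathbb R^{\mathcal X}$ to a nearest point of $\mathcal Q_n$, i.e. $Q(z)\in\arg\min_{\hat z\in\mathcal Q_n}\|z-\hat z\|_\infty$. Define $\tilde V_{T+1}(\hat z):=0$ for $\hat z\in\mathcal Q_n$ and, for $t=T,\dots,1$ and $\hat z\in\mathcal Q_n$, $$\tilde V_t(\hat z):=\min_{\gamma\in\mathcal G}\Big(\hat c_t(\hat z,\gamma)+\tilde V_{t+1}\big(Q(\hat f_t(\hat z,\gamma))\big)\Big).$$ Let $\psi_t(\hat z)$ be any minimizer of this right-hand side, let $\hat z_1=Q(\mathbb P(x_1=\cdot))$ and $\hat z_{t+1}=Q(\hat f_t(\hat z_t,\psi_t(\hat z_t)))$, and define the fully decentralized strategy $\mathbf g=\{g_t\}_{t=1}^T$ with $u^i_t=g_t(x^i_t)$, $g_t(x):=\psi_t(\hat z_t)(x)$. Then $|J(\mathbf g)-J^\ast|\le\epsilon(n)$ for some $\epsilon(n)\in\mathcal O(1/\sqrt n)$.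
   Context: Fix $n\in\mathbb N$ agents, a horizon $T\in\mathbb N$, finite sets $\mathcal X,\mathcal U,\mathcal W$; $\mathbb N_k=\{1,\dots,k\}$. Let $\mathcal I(\mathcal X)=[0,1]^{\mathcal X}$, $\Delta(\mathcal X)$ the probability vectors on $\mathcal X$, $\mathcal M_n=\{m\in\Delta(\mathcal X): m(x)\in\{0,\tfrac1n,\dots,1\}\}$, and $\mathcal Q_n=\{0,\tfrac1n,\dots,1\}^{\mathcal X}$. Agent $i\in\mathbb N_n$ has state $x^i_t\in\mathcal X$, action $u^i_t\in\mathcal U$; mean-field $m_t(x)=\frac1n\sum_i\mathbb 1(x^i_t=x)$. Dynamics $x^i_{t+1}=f_t(x^i_t,u^i_t,w^i_t,m_t)$, $f_t:\mathcal X\times\mathcal U\times\mathcal W\times\mathcal I(\mathcal X)\to\mathcal X$. Initial states i.i.d. with law $\mathbb P(x_1=\cdot)$; for each $t$ the noises $w^1_t,\dots,w^n_t$ are i.i.d. with law $\mathbb P(w_t=\cdot)$; initial states and all noises mutually independent. $\mathbb P(y|x,u,z)=\sum_w\mathbb 1(f_t(x,u,w,z)=y)\mathbb P(w_t=w)$. Costs $\ell_t:\mathcal X\times\mathcal U\times\mathcal I(\mathcal X)\to\mathbb R_{\ge0}$. Lipschitz assumption: constants $K^1_t,K^2_t>0$ with $|\mathbb P(y|x,u,z_1)-\mathbb P(y|x,u,z_2)|\le K^1_t\|z_1-z_2\|_\infty$, $|\ell_t(x,u,z_1)-\ell_t(x,u,z_2)|\le K^2_t\|z_1-z_2\|_\infty$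 for all $x,y,u$, $z_1,z_2\in\mathcal I(\mathcal X)$. Cost of a strategy: $J=\mathbb E[\sum_{t=1}^T\frac1n\sum_i\ell_t(x^i_t,u^i_t,m_t)]$. $J^\ast$ is the optimal cost over mean-field sharing strategies $u^i_t=g_t(x^i_t,m_t)$, $g_t:\mathcal X\times\mathcal M_n\to\mathcal U$. $\mathcal G$ is the set of maps $\gamma:\mathcal X\to\mathcal U$; $\hat f_t(z,\gamma)(y)=\sum_x z(x)\mathbb P(y|x,\gamma(x),z)$, $\hat c_t(z,\gamma)=\sum_x z(x)\ell_t(x,\gamma(x),z)$. Model data do not depend on $n$; $\mathcal O(1/\sqrt n)$ means bounded by $C/\sqrt n$ with $C$ independent of $n$. *)

(* Defs.v *)
From HB Require Import structures.
From mathcomp Require Import all_boot all_order all_algebra.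
From mathcomp Require Import classical_sets reals.
Set Implicit Arguments. Unset Strict Implicit. Unset Printing Implicit Defensive.
Import Order.TTheory GRing.Theory Num.Theory.
Local Open Scope ring_scope.

(* Times are 1-indexed: t = 1..T.  Mean-fields / distributions are X -> R. *)

Definition supnorm (R : realType) (X : finType) (z : X -> R) : R :=
  \big[Num.max/0]_(x : X) `|z x|.

Definition inI (R : realType) (X : finType) (z : X -> R) : Prop :=
  forall x, 0 <= z x <= 1.

Definition inQn (R : realType) (X : finType) (n : nat) (z : X -> R) : Prop :=
  forall x, exists k : nat, (k <= n)%N /\ z x = k%:R / n%:R.

Definition nearest_quantizer (R : realType) (X : finType) (n : nat)
    (Q : (X -> R) -> (X -> R)) : Prop :=
  forall z, inQn n (Q z) /\
    forall zh, inQn n zh ->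
      supnorm (fun x => z x - Q z x) <= supnorm (fun x => z x - zh x).

Definition Pk (R : realType) (X U W : finType)
    (pw : nat -> W -> R) (f : nat -> X -> U -> W -> (X -> R) -> X)
    (t : nat) (y x : X) (u : U) (z : X -> R) : R :=
  \sum_(w : W) (f t x u w z == y)%:R * pw t w.

Definition fhat (R : realType) (X U W : finType)
    (pw : nat -> W -> R) (f : nat -> X -> U -> W -> (X -> R) -> X)
    (t : nat) (z : X -> R) (g : {ffun X -> U}) : X -> R :=
  fun y => \sum_(x : X) z x * Pk pw f t y x (g x) z.

Definition chat (R : realType) (X U : finType)
    (l : nat -> X -> U -> (X -> R) -> R)
    (t : nat) (z : X -> R) (g : {ffun X -> U}) : R :=
  \sum_(x : X) z x * l t x (g x) z.

(* Vaux k t z : value with k stages remaining starting at time t *)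
Fixpoint Vaux (R : realType) (X U W : finType)
    (pw : nat -> W -> R) (f : nat -> X -> U -> W -> (X -> R) -> X)
    (l : nat -> X -> U -> (X -> R) -> R) (Q : (X -> R) -> (X -> R))
    (k t : nat) (z : X -> R) : R :=
  match k with
  | 0 => 0
  | k'.+1 => inf (range (fun g : {ffun X -> U} =>
               chat l t z g + Vaux pw f l Q k' t.+1 (Q (fhat pw f t z g))))
  end.

Definition Vtil (R : realType) (X U W : finType) (T : nat)
    (pw : nat -> W -> R) (f : nat -> X -> U -> W -> (X -> R) -> X)
    (l : nat -> X -> U -> (X -> R) -> R) (Q : (X -> R) -> (X -> R))
    (t : nat) (z : X -> R) : R :=
  Vaux pw f l Q (T.+1 - t) t z.

Definition is_minimizer (R : realType) (X U W : finType) (T n : nat)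
    (pw : nat -> W -> R) (f : nat -> X -> U -> W -> (X -> R) -> X)
    (l : nat -> X -> U -> (X -> R) -> R) (Q : (X -> R) -> (X -> R))
    (psi : nat -> (X -> R) -> {ffun X -> U}) : Prop :=
  forall t, (1 <= t <= T)%N -> forall zh, inQn n zh ->
    forall g : {ffun X -> U},
      chat l t zh (psi t zh) + Vtil T pw f l Q t.+1 (Q (fhat pw f t zh (psi t zh)))
      <= chat l t zh g + Vtil T pw f l Q t.+1 (Q (fhat pw f t zh g)).

(* zhat k = \hat z_{k+1} *)
Fixpoint zhat (R : realType) (X U W : finType)
    (px : X -> R) (pw : nat -> W -> R) (f : nat -> X -> U -> W -> (X -> R) -> X)
    (Q : (X -> R) -> (X -> R)) (psi : nat -> (X -> R) -> {ffun X -> U})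
    (k : nat) : X -> R :=
  match k with
  | 0 => Q px
  | k'.+1 => let z := zhat px pw f Q psi k' in Q (fhat pw f k'.+1 z (psi k'.+1 z))
  end.

(* mean-field sharing strategy: u^i_t = g t (x^i_t) (m_t) *)
Definition mf_strategy (R : realType) (X U : finType) := nat -> X -> (X -> R) -> U.

Definition gdec (R : realType) (X U W : finType)
    (px : X -> R) (pw : nat -> W -> R) (f : nat -> X -> U -> W -> (X -> R) -> X)
    (Q : (X -> R) -> (X -> R)) (psi : nat -> (X -> R) -> {ffun X -> U})
    : mf_strategy R X U :=
  fun t x _ => psi t (zhat px pw f Q psi t.-1) x.

Definition emp (R : realType) (X : finType) (n : nat) (xs : {ffun 'I_n -> X}) : X -> R :=
  fun x => #|[set i | xs i == x]|%:R / n%:R.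

(* traj k = joint state at time k+1, given initial states and the noises
   ws i = (w^1_{i+1},...,w^n_{i+1}) for i < T *)
Fixpoint traj (R : realType) (X U W : finType) (n T : nat)
    (f : nat -> X -> U -> W -> (X -> R) -> X) (g : mf_strategy R X U)
    (x1 : {ffun 'I_n -> X}) (ws : {ffun 'I_T -> {ffun 'I_n -> W}}) (k : nat)
    : {ffun 'I_n -> X} :=
  match k with
  | 0 => x1
  | k'.+1 =>
      let xs := traj f g x1 ws k' in
      let m := emp R xs in
      match @insub nat (fun j => j < T)%N 'I_T k' with
      | Some i => [ffun j => f k'.+1 (xs j) (g k'.+1 (xs j) m) (ws i j) m]
      | None => xs
      end
  end.

(* expected cost J(g) : exact expectation over the finite probability space of
   initial states and noises *)
Definition Jcost (R : realType) (X U W : finType) (n T : nat)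
    (px : X -> R) (pw : nat -> W -> R) (f : nat -> X -> U -> W -> (X -> R) -> X)
    (l : nat -> X -> U -> (X -> R) -> R) (g : mf_strategy R X U) : R :=
  \sum_(x1 : {ffun 'I_n -> X}) \sum_(ws : {ffun 'I_T -> {ffun 'I_n -> W}})
    ((\prod_(i < n) px (x1 i)) *
     (\prod_(t < T) \prod_(i < n) pw t.+1 (ws t i))) *
    \sum_(t < T)
      (let xs := traj f g x1 ws t in
       let m := emp R xs in
       n%:R^-1 * \sum_(i < n) l t.+1 (xs i) (g t.+1 (xs i) m) m).

Definition Jstar (R : realType) (X U W : finType) (n T : nat)
    (px : X -> R) (pw : nat -> W -> R) (f : nat -> X -> U -> W -> (X -> R) -> X)
    (l : nat -> X -> U -> (X -> R) -> R) : R :=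
  inf (range (fun g : mf_strategy R X U => Jcost n T px pw f l g)).

(* Main.v *)
Require Import Defs.
From HB Require Import structures.
From mathcomp Require Import all_boot all_order all_algebra.
From mathcomp Require Import classical_sets reals.
From mathcomp Require Import ring lra zify.
Import Order.TTheory GRing.Theory Num.Theory.
Local Open Scope ring_scope.
Set Implicit Arguments. Unset Strict Implicit. Unset Printing Implicit Defensive.

Local Notation dd z1 z2 := (supnorm (fun v => z1 v - z2 v)).

Section Sup.
Variables (R : realType) (X : finType).
Implicit Types z : X -> R.

Lemma supnorm_ge0 z : 0 <= supnorm z.
Proof. rewrite /supnorm; elim/big_ind: _ => //= a b ha hb; by rewrite le_max ha. Qed.

Lemma supnorm_ge z x : `|z x| <= supnorm z.
Proof. exact: (le_bigmax 0 (fun x => `|z x|) x). Qed.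

Lemma supnorm_le z c : 0 <= c -> (forall x, `|z x| <= c) -> supnorm z <= c.
Proof. move=> c0 h; apply/bigmax_leP; split => // i _; exact: h. Qed.

Lemma supnorm_le_sum z : supnorm z <= \sum_x `|z x|.
Proof.
apply: supnorm_le; first by apply: sumr_ge0.
move=> x; rewrite (bigD1 x) //= lerDl sumr_ge0 //.
Qed.

Lemma supnorm_tri z1 z2 z3 : supnorm (fun x => z1 x - z3 x) <=
  supnorm (fun x => z1 x - z2 x) + supnorm (fun x => z2 x - z3 x).
Proof.
apply: supnorm_le; first by rewrite addr_ge0 // supnorm_ge0.
move=> x; have -> : z1 x - z3 x = (z1 x - z2 x) + (z2 x - z3 x) by rewrite addrA subrK.
apply: le_trans (ler_normD _ _) _; apply: lerD.
  exact: (supnorm_ge (fun x => z1 x - z2 x)).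
exact: (supnorm_ge (fun x => z2 x - z3 x)).
Qed.

Lemma supnormC z1 z2 : supnorm (fun x => z1 x - z2 x) = supnorm (fun x => z2 x - z1 x).
Proof. by apply: eq_bigr => x _; rewrite distrC. Qed.

Lemma inI_norm z x : inI z -> `|z x| <= 1.
Proof. by move=> /(_ x) /andP[h0 h1]; rewrite ger0_norm. Qed.

End Sup.

Section Conc.
Variable R : realType.

Lemma sum_prod1 (S : finType) (n : nat) (p : S -> R) : \sum_s p s = 1 ->
  \sum_(v : {ffun 'I_n -> S}) \prod_i p (v i) = 1.
Proof.
move=> h; rewrite -(bigA_distr_bigA (fun (i : 'I_n) s => p s)) /=.
by apply: big1 => i _.
Qed.

Lemma sum_prod_mul (S : finType) (n : nat) (p : S -> R) (G : 'I_n -> S -> R) :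
  \sum_(v : {ffun 'I_n -> S}) (\prod_i p (v i)) * (\prod_i G i (v i)) =
  \prod_i \sum_s p s * G i s.
Proof.
rewrite (bigA_distr_bigA (fun (i : 'I_n) s => p s * G i s)) /=.
by apply: eq_bigr => v _; rewrite -big_split.
Qed.

Lemma conc (S : finType) (n : nat) (p : S -> R) (a : 'I_n -> S -> bool) :
  (0 < n)%N -> (forall s, 0 <= p s) -> \sum_s p s = 1 ->
  \sum_(v : {ffun 'I_n -> S}) (\prod_i p (v i)) *
     `| n%:R^-1 * \sum_i ((a i (v i))%:R - \sum_s p s * (a i s)%:R) |
  <= (Num.sqrt n%:R)^-1.
Proof.
move=> n0 p0 p1.
set mu := fun i => \sum_s p s * (a i s)%:R.
have mu0 i : 0 <= mu i by apply: sumr_ge0 => s _; rewrite mulr_ge0.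
have mu1 i : mu i <= 1.
  rewrite -p1; apply: ler_sum => s _; case: (a i s); rewrite ?mulr1 ?mulr0 //.
set Y := fun i s => (a i s)%:R - mu i.
have Y1 i s : Y i s ^+ 2 <= 1.
  rewrite /Y; have := mu0 i; have := mu1 i; case: (a i s) => /= h1 h2; nra.
have EY i : \sum_s p s * Y i s = 0.
  rewrite /Y; under eq_bigr do rewrite mulrBr.
  by rewrite sumrB -mulr_suml p1 mul1r subrr.
set P := fun v : {ffun 'I_n -> S} => \prod_i p (v i).
have P0 v : 0 <= P v by apply: prodr_ge0.
have P1 : \sum_v P v = 1 by apply: sum_prod1.
set D := fun v : {ffun 'I_n -> S} => n%:R^-1 * \sum_i Y i (v i).
change (\sum_v P v * `|D v| <= (Num.sqrt n%:R)^-1).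
set e := \sum_v P v * `|D v|.
have e0 : 0 <= e by apply: sumr_ge0 => v _; rewrite mulr_ge0.
have cross i j : i != j -> \sum_v P v * (Y i (v i) * Y j (v j)) = 0.
  move=> ij.
  have h := sum_prod_mul p (fun k s => if k == i then Y i s else if k == j then Y j s else 1).
  rewrite [X in _ = X](bigD1 i) //= eqxx EY mul0r in h.
  apply: (etrans _ h); apply: eq_bigr => v _; congr (_ * _).
  rewrite [RHS](bigD1 i) //= eqxx (bigD1 j) /=; last by rewrite eq_sym ij.
  rewrite eq_sym (negbTE ij) eqxx.
  rewrite big1 ?mulr1 // => k /andP[ki kj]; by rewrite (negbTE ki) (negbTE kj).
have diag i : \sum_v P v * (Y i (v i) * Y i (v i)) <= 1.
  rewrite -P1; apply: ler_sum => v _; rewrite -[X in _ <= X]mulr1 ler_wpM2l //.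
  by rewrite -expr2.
have M2 : \sum_v P v * D v ^+ 2 <= n%:R^-1.
  have -> : \sum_v P v * D v ^+ 2 =
     n%:R^-2 * \sum_i \sum_j \sum_v P v * (Y i (v i) * Y j (v j)).
    have pt v : P v * D v ^+ 2 =
        n%:R^-2 * \sum_i \sum_j P v * (Y i (v i) * Y j (v j)).
      rewrite /D exprMn [X in _ * (_ * X)]expr2 big_distrlr /= exprVn mulrCA; congr (_ * _).
      rewrite mulr_sumr; apply: eq_bigr => i _; by rewrite mulr_sumr.
    rewrite (eq_bigr _ (fun v _ => pt v)) -mulr_sumr; congr (_ * _).
    rewrite exchange_big /=; apply: eq_bigr => i _; by rewrite exchange_big.
  have -> : \sum_i \sum_j \sum_v P v * (Y i (v i) * Y j (v j)) =
            \sum_i \sum_v P v * (Y i (v i) * Y i (v i)).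
    apply: eq_bigr => i _; rewrite (bigD1 i) //= [X in _ + X]big1 ?addr0 // => j ji.
    by apply: cross; rewrite eq_sym.
  have nR : 0 < n%:R :> R by rewrite ltr0n.
  apply: le_trans (ler_wpM2l _ (ler_sum _ (fun i _ => diag i))) _.
    by rewrite invr_ge0 exprn_ge0 // ltW.
  rewrite sumr_const card_ord -mulr_natr mul1r.
  have nn : n%:R != 0 :> R by rewrite gt_eqF.
  have -> : n%:R ^- 2 * n%:R = n%:R^-1 :> R by field.
  by [].
(* Cauchy-Schwarz *)
have CS : e ^+ 2 <= \sum_v P v * D v ^+ 2.
  have h : 0 <= \sum_v P v * (`|D v| - e) ^+ 2.
    by apply: sumr_ge0 => v _; rewrite mulr_ge0 // sqr_ge0.
  have pt v : P v * (`|D v| - e) ^+ 2 = P v * D v ^+ 2 - (2 * e) * (P v * `|D v|) + e ^+ 2 * P v.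
    rewrite -[D v ^+ 2]real_normK ?num_real; ring.
  move: h; rewrite (eq_bigr _ (fun v _ => pt v)) big_split sumrB /= -!mulr_sumr P1 -/e.
  nra.
have nR : 0 < n%:R :> R by rewrite ltr0n.
have sq := sqr_sqrtr (ltW nR).
have s0 : 0 < Num.sqrt (n%:R : R) by rewrite sqrtr_gt0.
rewrite -[X in _ <= X]div1r ler_pdivlMr //.
have h : e ^+ 2 <= n%:R^-1 by apply: le_trans CS M2.
rewrite -{1}sq in h.
have : (e * Num.sqrt n%:R) ^+ 2 <= 1.
  rewrite exprMn; have := ler_wpM2r (exprn_ge0 2 (ltW s0)) h.
  by rewrite mulVf // gt_eqF // exprn_gt0.
have : 0 <= e * Num.sqrt n%:R by rewrite mulr_ge0 // ltW.
move: (e * Num.sqrt n%:R) => x; clear; move=> x0 x1; nra.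
Qed.

End Conc.

Section Emp.
Variables (R : realType) (X : finType) (n : nat).

Lemma card_sumR (P : pred 'I_n) : (#|[set i | P i]|%:R : R) = \sum_i (P i)%:R.
Proof.
rewrite -sum1dep_card natr_sum big_mkcond; apply: eq_bigr => i _; by case: (P i).
Qed.

Lemma emp_sum (xs : {ffun 'I_n -> X}) (F : X -> R) :
  \sum_i F (xs i) = n%:R * \sum_x emp R xs x * F x.
Proof.
have h0 : \sum_i F (xs i) = \sum_x (#|[set i | xs i == x]|%:R : R) * F x.
  under [RHS]eq_bigr do rewrite card_sumR mulr_suml.
  rewrite exchange_big /=; apply: eq_bigr => i _.
  rewrite (bigD1 (xs i)) //= eqxx mul1r big1 ?addr0 // => x /negbTE.
  by rewrite eq_sym => ->; rewrite mul0r.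
rewrite h0 mulr_sumr; apply: eq_bigr => x _; rewrite /emp mulrA.
case: n xs {h0} => [|m] xs.
  rewrite mul0r; suff -> : #|[set i | xs i == x]| = 0%N by rewrite mul0r.
  by apply/eqP; rewrite cards_eq0; apply/eqP/setP => -[].
by rewrite mulrCA mulfV ?mulr1 // pnatr_eq0.
Qed.

Lemma emp_inQn (xs : {ffun 'I_n -> X}) : inQn n (emp R xs).
Proof.
move=> x; exists #|[set i | xs i == x]|; split => //.
by apply: leq_trans (max_card _) _; rewrite card_ord.
Qed.

Lemma inQn_inI (z : X -> R) : inQn n z -> inI z.
Proof.
move=> h x; have [k [kn ->]] := h x.
case: n kn => [|m] kn; first by rewrite invr0 mulr0 lexx ler01.
rewrite divr_ge0 //= ler_pdivrMr ?ltr0n // mul1r ler_nat //.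
Qed.

End Emp.


Section Lip.
Variables (R : realType) (X U W : finType) (T : nat)
    (px : X -> R) (pw : nat -> W -> R)
    (f : nat -> X -> U -> W -> (X -> R) -> X)
    (l : nat -> X -> U -> (X -> R) -> R) (K1 K2 : nat -> R).
Hypothesis Hpw : forall t, (1 <= t <= T)%N -> (forall w, 0 <= pw t w) /\ \sum_(w : W) pw t w = 1.
Hypothesis Hl0 : forall t x u z, (1 <= t <= T)%N -> inI z -> 0 <= l t x u z.
Hypothesis HP : forall t y x u z1 z2, (1 <= t <= T)%N -> inI z1 -> inI z2 ->
     `|Pk pw f t y x u z1 - Pk pw f t y x u z2| <= K1 t * supnorm (fun v => z1 v - z2 v).
Hypothesis Hl : forall t x u z1 z2, (1 <= t <= T)%N -> inI z1 -> inI z2 ->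
     `|l t x u z1 - l t x u z2| <= K2 t * supnorm (fun v => z1 v - z2 v).

Definition Mt t := \sum_x \sum_u `|l t x u (fun _ => 0)| + `|K2 t|.
Definition Ac t := #|X|%:R * (`|K2 t| + Mt t).
Definition Bc t := #|X|%:R * (`|K1 t| + 1).

Lemma Ac_ge0 t : 0 <= Ac t.
Proof. by rewrite /Ac /Mt mulr_ge0 // !addr_ge0 // sumr_ge0 // => x _; rewrite sumr_ge0. Qed.
Lemma Bc_ge0 t : 0 <= Bc t.
Proof. by rewrite /Bc mulr_ge0 // !addr_ge0. Qed.

Lemma Pk_ge0 t y x u z : (1 <= t <= T)%N -> 0 <= Pk pw f t y x u z.
Proof. by move=> /Hpw[h0 _]; apply: sumr_ge0 => w _; rewrite mulr_ge0. Qed.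

Lemma Pk_le1 t y x u z : (1 <= t <= T)%N -> Pk pw f t y x u z <= 1.
Proof.
move=> /Hpw[h0 h1]; rewrite -h1; apply: ler_sum => w _.
by case: (_ == _); rewrite ?mul1r ?mul0r.
Qed.

Lemma dd_le1 (z : X -> R) : inI z -> dd z (fun _ => 0) <= 1.
Proof. by move=> zI; apply: supnorm_le => // x; rewrite subr0 inI_norm. Qed.

Lemma l_bound t x u z : (1 <= t <= T)%N -> inI z -> l t x u z <= Mt t.
Proof.
move=> ht zI.
have I0 : inI (fun _ : X => 0 : R) by move=> ?; rewrite lexx ler01.
have h := Hl x u ht zI I0.
have h1 : l t x u z <= `|l t x u (fun _ => 0)| + `|K2 t|.
  have h2 : K2 t * dd z (fun _ => 0) <= `|K2 t|.
    apply: le_trans (ler_norm _) _; rewrite normrM -[X in _ <= X]mulr1 ler_wpM2l //.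
    by rewrite ger0_norm ?supnorm_ge0 // dd_le1.
  have h3 := ler_norm (l t x u (fun _ => 0)).
  have h4 : l t x u z - l t x u (fun _ => 0) <= `|l t x u z - l t x u (fun _ => 0)| by apply: ler_norm.
  lra.
apply: le_trans h1 _; rewrite /Mt lerD2r.
rewrite (bigD1 x) //= (bigD1 u) //= -addrA lerDl addr_ge0 // sumr_ge0 //.
by move=> y _; rewrite sumr_ge0.
Qed.

Lemma fhat_lip t (g : {ffun X -> U}) (z1 z2 : X -> R) : (1 <= t <= T)%N -> inI z1 -> inI z2 ->
  dd (fhat pw f t z1 g) (fhat pw f t z2 g) <= Bc t * dd z1 z2.
Proof.
move=> ht I1 I2; apply: supnorm_le; first by rewrite mulr_ge0 ?Bc_ge0 ?supnorm_ge0.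
move=> y; rewrite /fhat -sumrB.
apply: le_trans (ler_norm_sum _ _ _) _.
rewrite /Bc -mulrA -[#|X|%:R]mulr1 -sumr_const.
rewrite mulr1 mulr_suml; apply: ler_sum => x _; rewrite mul1r.
set P1 := Pk pw f t y x (g x) z1; set P2 := Pk pw f t y x (g x) z2.
have -> : z1 x * P1 - z2 x * P2 = z1 x * (P1 - P2) + (z1 x - z2 x) * P2 by ring.
apply: le_trans (ler_normD _ _) _; rewrite !normrM.
have a1 := inI_norm x I1.
have a2 : `|P1 - P2| <= `|K1 t| * dd z1 z2.
  apply: le_trans (HP y x (g x) ht I1 I2) _; apply: ler_wpM2r; first exact: supnorm_ge0.
  exact: ler_norm.
have a3 : `|z1 x - z2 x| <= dd z1 z2 by exact: (supnorm_ge (fun v => z1 v - z2 v)).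
have a4 : `|P2| <= 1 by rewrite ger0_norm ?Pk_ge0 ?Pk_le1.
have d0 := supnorm_ge0 (fun v => z1 v - z2 v).
have b0 : 0 <= `|K1 t| * dd z1 z2 by rewrite mulr_ge0.
have e1 : `|z1 x| * `|P1 - P2| <= `|K1 t| * dd z1 z2.
  by rewrite -[X in _ <= X]mul1r ler_pM.
have e2 : `|z1 x - z2 x| * `|P2| <= dd z1 z2.
  by rewrite -[X in _ <= X]mulr1 ler_pM.
lra.
Qed.

Lemma chat_lip t (g : {ffun X -> U}) (z1 z2 : X -> R) : (1 <= t <= T)%N -> inI z1 -> inI z2 ->
  `|chat l t z1 g - chat l t z2 g| <= Ac t * dd z1 z2.
Proof.
move=> ht I1 I2; rewrite /chat -sumrB.
apply: le_trans (ler_norm_sum _ _ _) _.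
rewrite /Ac -mulrA -[#|X|%:R]mulr1 -sumr_const.
rewrite mulr1 mulr_suml; apply: ler_sum => x _; rewrite mul1r.
set P1 := l t x (g x) z1; set P2 := l t x (g x) z2.
have -> : z1 x * P1 - z2 x * P2 = z1 x * (P1 - P2) + (z1 x - z2 x) * P2 by ring.
apply: le_trans (ler_normD _ _) _; rewrite !normrM.
have a1 := inI_norm x I1.
have a2 : `|P1 - P2| <= `|K2 t| * dd z1 z2.
  apply: le_trans (Hl x (g x) ht I1 I2) _; apply: ler_wpM2r; first exact: supnorm_ge0.
  exact: ler_norm.
have a3 : `|z1 x - z2 x| <= dd z1 z2 by exact: (supnorm_ge (fun v => z1 v - z2 v)).
have a4 : `|P2| <= Mt t by rewrite ger0_norm ?Hl0 ?l_bound.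
have d0 := supnorm_ge0 (fun v => z1 v - z2 v).
have b0 : 0 <= `|K2 t| * dd z1 z2 by rewrite mulr_ge0.
have e1 : `|z1 x| * `|P1 - P2| <= `|K2 t| * dd z1 z2.
  by rewrite -[X in _ <= X]mul1r ler_pM.
have e2 : `|z1 x - z2 x| * `|P2| <= dd z1 z2 * Mt t.
  by rewrite ler_pM.
rewrite mulrDl; lra.
Qed.

End Lip.

Definition upd (I V : finType) (ws : {ffun I -> V}) (t : I) (v : V) : {ffun I -> V} :=
  [ffun s => if s == t then v else ws s].

Lemma markov (R : realType) (I V : finType) (q : I -> V -> R) (t : I)
   (H : {ffun I -> V} -> R) : \sum_v q t v = 1 ->
  \sum_(ws : {ffun I -> V}) (\prod_s q s (ws s)) * H ws =
  \sum_(ws : {ffun I -> V}) (\prod_s q s (ws s)) * \sum_v q t v * H (upd ws t v).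
Proof.
move=> q1.
have split ws : \prod_s q s (ws s) = q t (ws t) * \prod_(s | s != t) q s (ws s).
  by rewrite (bigD1 t).
under [RHS]eq_bigr do rewrite mulr_sumr.
rewrite pair_big /=.
pose sg (p : {ffun I -> V} * V) := (upd p.1 t p.2, p.1 t).
have sgK : involutive sg.
  move=> [ws v]; rewrite /sg /=; congr (_, _); last by rewrite ffunE eqxx.
  by apply/ffunP => s; rewrite !ffunE; case: eqP => // ->.
rewrite (reindex_inj (inv_inj sgK)) /=.
have updK ws v : upd (upd ws t v) t (ws t) = ws.
  by apply/ffunP => s; rewrite !ffunE; case: eqP => // ->.
have upd_t ws v : upd ws t v t = v by rewrite ffunE eqxx.
have updP ws v : \prod_s q s (upd ws t v s) = q t v * \prod_(s | s != t) q s (ws s).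
  rewrite (bigD1 t) //= upd_t; congr (_ * _); apply: eq_bigr => s /negbTE st.
  by rewrite ffunE st.
symmetry; transitivity (\sum_(p : {ffun I -> V} * V) (\prod_s q s (p.1 s)) * (q t p.2 * H p.1)).
  apply: eq_bigr => -[ws v] _ /=; rewrite updK updP split; ring.
rewrite -(pair_big xpredT xpredT (fun (ws : {ffun I -> V}) (v : V) =>
    (\prod_s q s (ws s)) * (q t v * H ws))) /=.
apply: eq_bigr => ws _.
by rewrite -mulr_sumr -mulr_suml q1 mul1r.
Qed.

Section DP.
Variables (R : realType) (X U W : finType) (n T : nat)
    (px : X -> R) (pw : nat -> W -> R)
    (f : nat -> X -> U -> W -> (X -> R) -> X)
    (l : nat -> X -> U -> (X -> R) -> R).

Definition pv (k : nat) (v : {ffun 'I_n -> W}) : R := \prod_i pw k.+1 (v i).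
Definition gam (g : mf_strategy R X U) k (xs : {ffun 'I_n -> X}) : {ffun X -> U} :=
  [ffun x => g k.+1 x (emp R xs)].
Definition stp k (ga : {ffun X -> U}) (xs : {ffun 'I_n -> X}) (v : {ffun 'I_n -> W})
  : {ffun 'I_n -> X} := [ffun j => f k.+1 (xs j) (ga (xs j)) (v j) (emp R xs)].
Definition cost (g : mf_strategy R X U) k (xs : {ffun 'I_n -> X}) : R :=
  n%:R^-1 * \sum_i l k.+1 (xs i) (g k.+1 (xs i) (emp R xs)) (emp R xs).
Fixpoint hv (g : mf_strategy R X U) (r k : nat) (xs : {ffun 'I_n -> X}) : R :=
  match r with
  | 0 => 0
  | r'.+1 => cost g k xs + \sum_v pv k v * hv g r' k.+1 (stp k (gam g k xs) xs v)
  end.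

Lemma traj_succ g x1 (ws : {ffun 'I_T -> {ffun 'I_n -> W}}) k (kT : (k < T)%N) :
  traj f g x1 ws k.+1 = stp k (gam g k (traj f g x1 ws k)) (traj f g x1 ws k) (ws (Ordinal kT)).
Proof.
rewrite /= (insubT (fun j => j < T)%N kT) /=.
by apply/ffunP => j; rewrite !ffunE.
Qed.

Lemma traj_indep g x1 (ws ws' : {ffun 'I_T -> {ffun 'I_n -> W}}) j :
  (forall s : 'I_T, (s < j)%N -> ws s = ws' s) -> traj f g x1 ws j = traj f g x1 ws' j.
Proof.
elim: j => [//|j IH] h /=.
rewrite IH; last by move=> s sj; apply: h; rewrite ltnS ltnW.
case: insubP => [i _ ei|//].
by rewrite h // ei.
Qed.

Hypothesis Hpw1 : forall k, (k < T)%N -> \sum_v pv k v = 1.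

Lemma Jcost_h g : Jcost n T px pw f l g =
  \sum_(x1 : {ffun 'I_n -> X}) (\prod_i px (x1 i)) * hv g T 0 x1.
Proof.
pose Pw (ws : {ffun 'I_T -> {ffun 'I_n -> W}}) := \prod_(t < T) pv t (ws t).
pose Y (k : nat) (x1 : {ffun 'I_n -> X}) (ws : {ffun 'I_T -> {ffun 'I_n -> W}}) := \sum_(t < k) cost g t (traj f g x1 ws t) + hv g (T - k) k (traj f g x1 ws k).
have step k x1 : (k < T)%N -> \sum_ws Pw ws * Y k.+1 x1 ws = \sum_ws Pw ws * Y k x1 ws.
  move=> kT.
  have recr (ws : {ffun 'I_T -> {ffun 'I_n -> W}}) : \sum_(t < k.+1) cost g t (traj f g x1 ws t) =
     \sum_(t < k) cost g t (traj f g x1 ws t) + cost g k (traj f g x1 ws k).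
    by rewrite big_ord_recr.
  rewrite /Y; under eq_bigr => ws _ do rewrite recr.
  have -> : (T - k = (T - k.+1).+1)%N by lia.
  have hvS r kk xs : hv g r.+1 kk xs =
     cost g kk xs + \sum_v pv kk v * hv g r kk.+1 (stp kk (gam g kk xs) xs v) by [].
  under eq_bigr do rewrite mulrDr.
  under [RHS]eq_bigr do rewrite hvS addrA mulrDr.
  rewrite !big_split; congr (_ + _).
  have M : \sum_(ws : {ffun 'I_T -> {ffun 'I_n -> W}}) (\prod_(s < T) pv s (ws s)) *
        hv g (T - k.+1) k.+1 (traj f g x1 ws k.+1) =
     \sum_(ws : {ffun 'I_T -> {ffun 'I_n -> W}}) (\prod_(s < T) pv s (ws s)) *
        \sum_v pv k v * hv g (T - k.+1) k.+1 (traj f g x1 (upd ws (Ordinal kT) v) k.+1).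
    exact: (@markov R _ _ (fun (s : 'I_T) v => pv s v) (Ordinal kT)
     (fun ws => hv g (T - k.+1) k.+1 (traj f g x1 ws k.+1)) (Hpw1 kT)).
  rewrite /Pw M.
  apply: eq_bigr => ws _; congr (_ * _); apply: eq_bigr => v _; congr (_ * _).
  rewrite traj_succ.
  have -> : traj f g x1 (upd ws (Ordinal kT) v) k = traj f g x1 ws k.
    apply: traj_indep => s sk; rewrite ffunE; case: eqP => // es.
    by move: sk; rewrite es /= ltnn.
  by rewrite ffunE eqxx.
have all k : (k <= T)%N -> \sum_(x1 : {ffun 'I_n -> X}) (\prod_i px (x1 i)) * \sum_ws Pw ws * Y k x1 ws =
     \sum_(x1 : {ffun 'I_n -> X}) (\prod_i px (x1 i)) * \sum_ws Pw ws * Y 0%N x1 ws.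
  elim: k => [//|k IH] kT; apply: etrans (IH (ltnW kT)).
  by apply: eq_bigr => x1 _; rewrite step.
have h := all T (leqnn T).
have PW1 : \sum_ws Pw ws = 1.
  rewrite /Pw -(bigA_distr_bigA (fun (t : 'I_T) v => pv t v)) /=.
  by apply: big1 => t _; apply: Hpw1.
have hv0 xs k : hv g 0 k xs = 0 by [].
apply: etrans (etrans h _).
  rewrite /Jcost; apply: eq_bigr => x1 _; rewrite mulr_sumr; apply: eq_bigr => ws _.
  by rewrite /Y subnn hv0 addr0 mulrA.
apply: eq_bigr => x1 _; rewrite /Y.
rewrite (eq_bigr (fun ws => Pw ws * hv g T 0 x1)); last first.
  by move=> ws _; rewrite big_ord0 add0r subn0.
by rewrite -mulr_suml PW1 mul1r.
Qed.

End DP.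


Lemma inf_le_F (R : realType) (G : finType) (F : G -> R) g : inf (range F) <= F g.
Proof.
apply: ge_inf; last by exists g.
exists (- \sum_g' `|F g'|) => y [g' _ <-].
have h1 : `|F g'| <= \sum_g' `|F g'| by rewrite (bigD1 g') //= lerDl sumr_ge0.
have := lexx `|F g'|; rewrite ler_norml => /andP[h2 _].
lra.
Qed.

Lemma F_le_inf (R : realType) (G : finType) (F : G -> R) (g0 : G) a :
  (forall g, a <= F g) -> a <= inf (range F).
Proof.
move=> h; apply: lb_le_inf; first by exists (F g0), g0.
by move=> y [g _ <-].
Qed.

Section Main.
Variables (R : realType) (X U W : finType) (T : nat)
    (px : X -> R) (pw : nat -> W -> R)
    (f : nat -> X -> U -> W -> (X -> R) -> X)
    (l : nat -> X -> U -> (X -> R) -> R) (K1 K2 : nat -> R).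
Hypothesis Hpx0 : forall x, 0 <= px x.
Hypothesis Hpx1 : \sum_(x : X) px x = 1.
Hypothesis Hpw : forall t, (1 <= t <= T)%N -> (forall w, 0 <= pw t w) /\ \sum_(w : W) pw t w = 1.
Hypothesis Hl0 : forall t x u z, (1 <= t <= T)%N -> inI z -> 0 <= l t x u z.
Hypothesis HP : forall t y x u z1 z2, (1 <= t <= T)%N -> inI z1 -> inI z2 ->
     `|Pk pw f t y x u z1 - Pk pw f t y x u z2| <= K1 t * supnorm (fun v => z1 v - z2 v).
Hypothesis Hl : forall t x u z1 z2, (1 <= t <= T)%N -> inI z1 -> inI z2 ->
     `|l t x u z1 - l t x u z2| <= K2 t * supnorm (fun v => z1 v - z2 v).
Variable n : nat.
Hypothesis n0 : (0 < n)%N.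

Lemma rng k : (k < T)%N -> (1 <= k.+1 <= T)%N.
Proof. by move=> kT; rewrite ltn0Sn. Qed.

Lemma pv0 k (v : {ffun 'I_n -> W}) : (k < T)%N -> 0 <= pv pw k v.
Proof. by move=> /rng /Hpw [h _]; apply: prodr_ge0. Qed.

Lemma pv1 k : (k < T)%N -> \sum_(v : {ffun 'I_n -> W}) pv pw k v = 1.
Proof. by move=> /rng /Hpw [_ h]; apply: sum_prod1. Qed.

Lemma avg_emp (xs : {ffun 'I_n -> X}) (F : X -> R) :
  \sum_x emp R xs x * F x = n%:R^-1 * \sum_i F (xs i).
Proof. by rewrite emp_sum mulKf // pnatr_eq0 -lt0n. Qed.

Lemma cost_chat (g : mf_strategy R X U) k (xs : {ffun 'I_n -> X}) :
  cost l g k xs = chat l k.+1 (emp R xs) (gam g k xs).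
Proof.
rewrite /chat avg_emp /cost; congr (_ * _); apply: eq_bigr => i _.
by rewrite ffunE.
Qed.

Lemma sqrt_gt0 : 0 < Num.sqrt (n%:R : R).
Proof. by rewrite sqrtr_gt0 ltr0n. Qed.

Lemma sum_const_X (c : R) : \sum_(y : X) c = #|X|%:R * c.
Proof. by rewrite sumr_const mulr_natl. Qed.

Lemma conc_step k (kT : (k < T)%N) (ga : {ffun X -> U}) (xs : {ffun 'I_n -> X}) :
  \sum_v pv pw k v * dd (emp R (stp f k ga xs v)) (fhat pw f k.+1 (emp R xs) ga)
  <= #|X|%:R / Num.sqrt n%:R.
Proof.
have [p0 p1] := Hpw (rng kT).
apply: le_trans (ler_sum _ (fun v _ => ler_wpM2l (pv0 v kT) (supnorm_le_sum _))) _.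
under eq_bigr do rewrite mulr_sumr.
rewrite exchange_big /= -sum_const_X; apply: ler_sum => y _.
pose a (i : 'I_n) w := f k.+1 (xs i) (ga (xs i)) w (emp R xs) == y.
have E v : emp R (stp f k ga xs v) y - fhat pw f k.+1 (emp R xs) ga y =
    n%:R^-1 * \sum_i ((a i (v i))%:R - \sum_w pw k.+1 w * (a i w)%:R).
  rewrite /fhat avg_emp {1}/emp card_sumR sumrB mulrBr mulrC; congr (_ - _).
    by congr (_ * _); apply: eq_bigr => i _; rewrite ffunE.
  congr (_ * _); apply: eq_bigr => i _; rewrite /Pk.
  by apply: eq_bigr => w _; rewrite mulrC.
under eq_bigr do rewrite E.
exact: (conc a n0 p0 p1).
Qed.

Lemma conc_init : \sum_(x1 : {ffun 'I_n -> X}) (\prod_i px (x1 i)) * dd (emp R x1) px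
  <= #|X|%:R / Num.sqrt n%:R.
Proof.
have h (v : {ffun 'I_n -> X}) : (\prod_i px (v i)) * dd (emp R v) px <=
    (\prod_i px (v i)) * \sum_y `|emp R v y - px y|.
  by apply: ler_wpM2l; [apply: prodr_ge0 => i _; apply: Hpx0 | apply: supnorm_le_sum].
apply: le_trans (ler_sum _ (fun v _ => h v)) _.
under eq_bigr do rewrite mulr_sumr.
rewrite exchange_big /= -sum_const_X; apply: ler_sum => y _.
pose a (i : 'I_n) x := x == y.
have E (v : {ffun 'I_n -> X}) : emp R v y - px y =
    n%:R^-1 * \sum_i ((a i (v i))%:R - \sum_x px x * (a i x)%:R).
  rewrite /emp card_sumR sumrB mulrBr mulrC; congr (_ - _).
  have e1 i : \sum_x px x * (a i x)%:R = px y.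
    by rewrite (bigD1 y) //= /a eqxx mulr1 big1 ?addr0 // => x /negbTE ->; rewrite mulr0.
  under eq_bigr do rewrite e1.
  have nn : n%:R != 0 :> R by rewrite pnatr_eq0 -lt0n.
  by rewrite sumr_const card_ord -mulr_natl; field.
under eq_bigr do rewrite E.
exact: (conc a n0 Hpx0 Hpx1).
Qed.

Variable Q : (X -> R) -> (X -> R).
Hypothesis HQ : nearest_quantizer n Q.

Fixpoint Lr (r : nat) : R :=
  match r with
  | 0 => 0
  | r'.+1 => Ac l K2 (T - r'.+1).+1 + 2 * Lr r' * Bc X K1 (T - r'.+1).+1
  end.
Fixpoint er (r : nat) : R :=
  match r with
  | 0 => 0
  | r'.+1 => er r' + 2 * Lr r' * #|X|%:R
  end.

Lemma Lr_ge0 r : 0 <= Lr r.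
Proof.
elim: r => [|r IH] /=; first exact: lexx.
by rewrite addr_ge0 ?Ac_ge0 // mulr_ge0 ?Bc_ge0 // mulr_ge0.
Qed.

Lemma er_ge0 r : 0 <= er r.
Proof.
elim: r => [|r IH] /=; first exact: lexx.
by rewrite addr_ge0 // mulr_ge0 // mulr_ge0 // Lr_ge0.
Qed.

Lemma stepdist k (kT : (k < T)%N) (ga : {ffun X -> U}) (xs : {ffun 'I_n -> X}) z :
  inQn n z ->
  \sum_v pv pw k v * dd (emp R (stp f k ga xs v)) (Q (fhat pw f k.+1 z ga))
  <= 2 * (#|X|%:R / Num.sqrt n%:R + Bc X K1 k.+1 * dd (emp R xs) z).
Proof.
move=> zQ.
set a := fhat pw f k.+1 z ga.
set m := emp R xs.
set Bd := Bc X K1 k.+1 * dd m z.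
have pt v : dd (emp R (stp f k ga xs v)) (Q a) <=
    2 * (dd (emp R (stp f k ga xs v)) (fhat pw f k.+1 m ga) + Bd).
  set m' := emp R (stp f k ga xs v).
  have t1 := supnorm_tri m' a (Q a).
  have [_ hq] := HQ a.
  have t2 := hq m' (emp_inQn R _).
  have t3 := supnormC a m'.
  have t4 := supnorm_tri m' (fhat pw f k.+1 m ga) a.
  have t5 := fhat_lip Hpw HP ga (rng kT) (inQn_inI (emp_inQn R xs)) (inQn_inI zQ).
  rewrite /Bd; rewrite -/m -/a in t5.
  lra.
apply: le_trans (ler_sum _ (fun v _ => ler_wpM2l (pv0 v kT) (pt v))) _.
set D := fun v => dd (emp R (stp f k ga xs v)) (fhat pw f k.+1 m ga).
have -> : \sum_(v : {ffun 'I_n -> W}) pv pw k v * (2 * (D v + Bd)) =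
    2 * (\sum_(v : {ffun 'I_n -> W}) pv pw k v * D v) + (2 * Bd) * \sum_(v : {ffun 'I_n -> W}) pv pw k v.
  rewrite mulr_sumr mulr_sumr -big_split; apply: eq_bigr => v _; rewrite /=; ring.
rewrite pv1 // mulr1.
have := conc_step kT ga xs; rewrite -/m -/D => h.
lra.
Qed.

Lemma lower (g : mf_strategy R X U) r : (r <= T)%N -> forall (xs : {ffun 'I_n -> X}) (z : X -> R), inQn n z ->
  Vaux pw f l Q r (T - r).+1 z - Lr r * dd (emp R xs) z - er r / Num.sqrt n%:R
  <= hv pw f l g r (T - r) xs.
Proof.
elim: r => [|r IH] rT xs z zQ.
  rewrite /=; lra.
set k := (T - r.+1)%N.
have kT : (k < T)%N by rewrite /k; lia.
have ek : (T - r = k.+1)%N by rewrite /k; lia.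
have IH' := IH (ltnW rT); rewrite ek in IH'.
have hvS : hv pw f l g r.+1 k xs = cost l g k xs +
    \sum_v pv pw k v * hv pw f l g r k.+1 (stp f k (gam g k xs) xs v) by [].
pose F := fun ga => chat l k.+1 z ga + Vaux pw f l Q r k.+2 (Q (fhat pw f k.+1 z ga)).
have VS : Vaux pw f l Q r.+1 k.+1 z = inf (range F) by [].
have LS : Lr r.+1 = Ac l K2 k.+1 + 2 * Lr r * Bc X K1 k.+1 by [].
have ES : er r.+1 = er r + 2 * Lr r * #|X|%:R by [].
rewrite hvS VS LS ES cost_chat.
set ga := gam g k xs.
set m := emp R xs.
set z' := Q (fhat pw f k.+1 z ga).
have z'Q : inQn n z' := (HQ _).1.
have h4 : inf (range F) <= chat l k.+1 z ga + Vaux pw f l Q r k.+2 z' := inf_le_F F ga.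
have h1 := chat_lip Hl0 Hl ga (rng kT) (inQn_inI (emp_inQn R xs)) (inQn_inI zQ).
rewrite ler_norml -/m in h1; case/andP: h1 => h1 _.
set S := \sum_v pv pw k v * dd (emp R (stp f k ga xs v)) z'.
have h2 : Vaux pw f l Q r k.+2 z' - er r / Num.sqrt n%:R - Lr r * S <=
    \sum_v pv pw k v * hv pw f l g r k.+1 (stp f k ga xs v).
  have E : \sum_v pv pw k v * (Vaux pw f l Q r k.+2 z' - Lr r * dd (emp R (stp f k ga xs v)) z'
       - er r / Num.sqrt n%:R) = Vaux pw f l Q r k.+2 z' - er r / Num.sqrt n%:R - Lr r * S.
    transitivity (\sum_v ((Vaux pw f l Q r k.+2 z' - er r / Num.sqrt n%:R) * pv pw k v -
      Lr r * (pv pw k v * dd (emp R (stp f k ga xs v)) z'))).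
      by apply: eq_bigr => v _; rewrite /=; ring.
    by rewrite sumrB -!mulr_sumr pv1 // mulr1.
  rewrite -E; apply: ler_sum => v _; apply: ler_wpM2l; first exact: pv0. exact: (IH' (stp f k ga xs v) z' z'Q).
have h3 := stepdist kT ga xs zQ.
rewrite -/z' -/S -/m in h3.
have h5 := ler_wpM2l (Lr_ge0 r) h3.
lra.
Qed.


Lemma zhat_inQn psi k : inQn n (zhat px pw f Q psi k).
Proof. by case: k => [|k] /=; apply: (HQ _).1. Qed.

Lemma gam_gdec psi k (xs : {ffun 'I_n -> X}) :
  gam (gdec px pw f Q psi) k xs = psi k.+1 (zhat px pw f Q psi k).
Proof. by apply/ffunP => x; rewrite ffunE. Qed.

Lemma upper psi (Hmin : is_minimizer T n pw f l Q psi) r : (r <= T)%N ->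
  forall xs : {ffun 'I_n -> X},
  hv pw f l (gdec px pw f Q psi) r (T - r) xs <=
  Vaux pw f l Q r (T - r).+1 (zhat px pw f Q psi (T - r))
  + Lr r * dd (emp R xs) (zhat px pw f Q psi (T - r)) + er r / Num.sqrt n%:R.
Proof.
elim: r => [|r IH] rT xs.
  rewrite /=; lra.
set k := (T - r.+1)%N.
have kT : (k < T)%N by rewrite /k; lia.
have ek : (T - r = k.+1)%N by rewrite /k; lia.
set gd := gdec px pw f Q psi.
set z := zhat px pw f Q psi k.
have zQ : inQn n z := zhat_inQn psi k.
have IH' := IH (ltnW rT); rewrite ek in IH'.
have hvS : hv pw f l gd r.+1 k xs = cost l gd k xs +
    \sum_v pv pw k v * hv pw f l gd r k.+1 (stp f k (gam gd k xs) xs v) by [].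
pose F := fun ga => chat l k.+1 z ga + Vaux pw f l Q r k.+2 (Q (fhat pw f k.+1 z ga)).
have VS : Vaux pw f l Q r.+1 k.+1 z = inf (range F) by [].
have LS : Lr r.+1 = Ac l K2 k.+1 + 2 * Lr r * Bc X K1 k.+1 by [].
have ES : er r.+1 = er r + 2 * Lr r * #|X|%:R by [].
rewrite hvS VS LS ES cost_chat gam_gdec -/z.
set ga := psi k.+1 z.
have ez : zhat px pw f Q psi k.+1 = Q (fhat pw f k.+1 z ga) by [].
rewrite ez in IH'.
set m := emp R xs.
set z' := Q (fhat pw f k.+1 z ga).
have z'Q : inQn n z' := (HQ _).1.
have h4 : chat l k.+1 z ga + Vaux pw f l Q r k.+2 z' <= inf (range F).
  apply: (@F_le_inf R _ F ga) => g'.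
  have er' : (T.+1 - k.+2 = r)%N by rewrite /k; lia.
  have := Hmin k.+1 (rng kT) z zQ g'; rewrite /Vtil er' //.
have h1 := chat_lip Hl0 Hl ga (rng kT) (inQn_inI (emp_inQn R xs)) (inQn_inI zQ).
rewrite ler_norml -/m in h1; case/andP: h1 => _ h1.
set S := \sum_v pv pw k v * dd (emp R (stp f k ga xs v)) z'.
have h2 : \sum_v pv pw k v * hv pw f l gd r k.+1 (stp f k ga xs v) <=
    Vaux pw f l Q r k.+2 z' + er r / Num.sqrt n%:R + Lr r * S.
  have E : \sum_v pv pw k v * (Vaux pw f l Q r k.+2 z' + Lr r * dd (emp R (stp f k ga xs v)) z'
       + er r / Num.sqrt n%:R) = Vaux pw f l Q r k.+2 z' + er r / Num.sqrt n%:R + Lr r * S.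
    transitivity (\sum_v ((Vaux pw f l Q r k.+2 z' + er r / Num.sqrt n%:R) * pv pw k v +
      Lr r * (pv pw k v * dd (emp R (stp f k ga xs v)) z'))).
      by apply: eq_bigr => v _; rewrite /=; ring.
    by rewrite big_split /= -!mulr_sumr pv1 // mulr1.
  rewrite -E; apply: ler_sum => v _; apply: ler_wpM2l; first exact: pv0.
  exact: (IH' (stp f k ga xs v)).
have h3 := stepdist kT ga xs zQ.
rewrite -/z' -/S -/m in h3.
have h5 := ler_wpM2l (Lr_ge0 r) h3.
lra.
Qed.


Lemma final psi (Hmin : is_minimizer T n pw f l Q psi) :
  `|Jcost n T px pw f l (gdec px pw f Q psi) - Jstar n T px pw f l| <=
   2 * (er T + 2 * Lr T * #|X|%:R) / Num.sqrt n%:R.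
Proof.
set gd := gdec px pw f Q psi.
have Hpw1 : forall k, (k < T)%N -> \sum_(v : {ffun 'I_n -> W}) pv pw k v = 1 := pv1.
set z0 := zhat px pw f Q psi 0.
have z0Q : inQn n z0 := zhat_inQn psi 0.
have ez0 : z0 = Q px by [].
set V1 := Vaux pw f l Q T 1 z0.
have Px0 (x1 : {ffun 'I_n -> X}) : 0 <= \prod_i px (x1 i).
  by apply: prodr_ge0 => i _; apply: Hpx0.
have Px1 : \sum_(x1 : {ffun 'I_n -> X}) \prod_i px (x1 i) = 1 := sum_prod1 n Hpx1.
have D0 : \sum_(x1 : {ffun 'I_n -> X}) (\prod_i px (x1 i)) * dd (emp R x1) z0
    <= 2 * (#|X|%:R / Num.sqrt n%:R).
  have pt (x1 : {ffun 'I_n -> X}) : dd (emp R x1) z0 <= 2 * dd (emp R x1) px.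
    have t1 := supnorm_tri (emp R x1) px z0.
    have [_ hq] := HQ px.
    have t2 := hq (emp R x1) (emp_inQn R x1).
    have t3 := supnormC px (emp R x1).
    rewrite -ez0 in t2; lra.
  apply: le_trans (ler_sum _ (fun x1 _ => ler_wpM2l (Px0 x1) (pt x1))) _.
  under eq_bigr do rewrite mulrCA.
  rewrite -mulr_sumr.
  have := conc_init; lra.
have lowJ g : V1 - (er T + 2 * Lr T * #|X|%:R) / Num.sqrt n%:R <= Jcost n T px pw f l g.
  rewrite (@Jcost_h R X U W n T px pw f l Hpw1 g).
  have h (x1 : {ffun 'I_n -> X}) : (\prod_i px (x1 i)) * (V1 - Lr T * dd (emp R x1) z0 - er T / Num.sqrt n%:R)
      <= (\prod_i px (x1 i)) * hv pw f l g T 0 x1.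
    apply: ler_wpM2l; first exact: Px0.
    by have := lower g (leqnn T) x1 z0Q; rewrite subnn.
  have E : \sum_(x1 : {ffun 'I_n -> X}) (\prod_i px (x1 i)) * (V1 - Lr T * dd (emp R x1) z0 - er T / Num.sqrt n%:R)
     = V1 - er T / Num.sqrt n%:R - Lr T * \sum_(x1 : {ffun 'I_n -> X}) (\prod_i px (x1 i)) * dd (emp R x1) z0.
    transitivity (\sum_(x1 : {ffun 'I_n -> X}) ((V1 - er T / Num.sqrt n%:R) * \prod_i px (x1 i) -
       Lr T * ((\prod_i px (x1 i)) * dd (emp R x1) z0))).
      by apply: eq_bigr => x1 _; rewrite /=; ring.
    by rewrite sumrB -!mulr_sumr Px1 mulr1.
  have hh : \sum_(x1 : {ffun 'I_n -> X}) (\prod_i px (x1 i)) * (V1 - Lr T * dd (emp R x1) z0 - er T / Num.sqrt n%:R)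
      <= \sum_(x1 : {ffun 'I_n -> X}) (\prod_i px (x1 i)) * hv pw f l g T 0 x1.
    by apply: ler_sum => x1 _; exact: h.
  rewrite E in hh.
  have := ler_wpM2l (Lr_ge0 T) D0.
  lra.
have upJ : Jcost n T px pw f l gd <= V1 + (er T + 2 * Lr T * #|X|%:R) / Num.sqrt n%:R.
  rewrite (@Jcost_h R X U W n T px pw f l Hpw1 gd).
  have h (x1 : {ffun 'I_n -> X}) : (\prod_i px (x1 i)) * hv pw f l gd T 0 x1 <=
      (\prod_i px (x1 i)) * (V1 + Lr T * dd (emp R x1) z0 + er T / Num.sqrt n%:R).
    apply: ler_wpM2l; first exact: Px0.
    by have := upper Hmin (leqnn T) x1; rewrite subnn.
  have E : \sum_(x1 : {ffun 'I_n -> X}) (\prod_i px (x1 i)) * (V1 + Lr T * dd (emp R x1) z0 + er T / Num.sqrt n%:R)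
     = V1 + er T / Num.sqrt n%:R + Lr T * \sum_(x1 : {ffun 'I_n -> X}) (\prod_i px (x1 i)) * dd (emp R x1) z0.
    transitivity (\sum_(x1 : {ffun 'I_n -> X}) ((V1 + er T / Num.sqrt n%:R) * \prod_i px (x1 i) +
       Lr T * ((\prod_i px (x1 i)) * dd (emp R x1) z0))).
      by apply: eq_bigr => x1 _; rewrite /=; ring.
    by rewrite big_split /= -!mulr_sumr Px1 mulr1.
  have hh : \sum_(x1 : {ffun 'I_n -> X}) (\prod_i px (x1 i)) * hv pw f l gd T 0 x1 <=
      \sum_(x1 : {ffun 'I_n -> X}) (\prod_i px (x1 i)) * (V1 + Lr T * dd (emp R x1) z0 + er T / Num.sqrt n%:R).
    by apply: ler_sum => x1 _; exact: h.
  rewrite E in hh.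
  have := ler_wpM2l (Lr_ge0 T) D0.
  lra.
have lb : lbound (range (fun g : mf_strategy R X U => Jcost n T px pw f l g))
    (V1 - (er T + 2 * Lr T * #|X|%:R) / Num.sqrt n%:R).
  by move=> y [g _ <-]; apply: lowJ.
have Jl : V1 - (er T + 2 * Lr T * #|X|%:R) / Num.sqrt n%:R <= Jstar n T px pw f l.
  by apply: lb_le_inf => //; exists (Jcost n T px pw f l gd), gd.
have Ju : Jstar n T px pw f l <= Jcost n T px pw f l gd.
  apply: (ge_inf (E := range (fun g : mf_strategy R X U => Jcost n T px pw f l g))).
    by exists (V1 - (er T + 2 * Lr T * #|X|%:R) / Num.sqrt n%:R).
  by exists gd.
rewrite ger0_norm; last by rewrite subr_ge0.
lra.
Qed.

End Main.

Theorem corollary1 (R : realType) (X U W : finType) (T : nat)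
    (px : X -> R) (pw : nat -> W -> R)
    (f : nat -> X -> U -> W -> (X -> R) -> X)
    (l : nat -> X -> U -> (X -> R) -> R) (K1 K2 : nat -> R) :
  (forall x, 0 <= px x) -> \sum_(x : X) px x = 1 ->
  (forall t, (1 <= t <= T)%N -> (forall w, 0 <= pw t w) /\ \sum_(w : W) pw t w = 1) ->
  (forall t x u z, (1 <= t <= T)%N -> inI z -> 0 <= l t x u z) ->
  (forall t, (1 <= t <= T)%N -> 0 < K1 t /\ 0 < K2 t) ->
  (forall t y x u z1 z2, (1 <= t <= T)%N -> inI z1 -> inI z2 ->
     `|Pk pw f t y x u z1 - Pk pw f t y x u z2|
       <= K1 t * supnorm (fun v => z1 v - z2 v)) ->
  (forall t x u z1 z2, (1 <= t <= T)%N -> inI z1 -> inI z2 ->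
     `|l t x u z1 - l t x u z2| <= K2 t * supnorm (fun v => z1 v - z2 v)) ->
  exists C : R, forall n : nat, (0 < n)%N ->
    forall (Q : (X -> R) -> (X -> R)) (psi : nat -> (X -> R) -> {ffun X -> U}),
      nearest_quantizer n Q ->
      is_minimizer T n pw f l Q psi ->
      `|Jcost n T px pw f l (gdec px pw f Q psi) - Jstar n T px pw f l|
        <= C / Num.sqrt n%:R.
Proof.
move=> Hpx0 Hpx1 Hpw Hl0 HK HP Hl.
exists (2 * (er T l K1 K2 T + 2 * Lr T l K1 K2 T * #|X|%:R)).
move=> n n0 Q psi HQ Hmin.
exact: (final Hpx0 Hpx1 Hpw Hl0 HP Hl n0 HQ Hmin).
Qed.
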